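(* Let $\mathbb{F}_q$ be a finite field of characteristic $p$, let $r,v,k,t$ be positive integers, and let $f(x):=x^r h_k(x^v)^t$ where $h_k(x):=x^{k-1}+x^{k-2}+\dots+1$. Let $s:=\gcd(v,q-1)$, $d:=(q-1)/s$ and $e:=v/s$. Then $f$ permutes $\mathbb{F}_q$ if and only if all of the following hold: (1) $\gcd(r,s)=\gcd(d,k)=1$; (2) $\gcd(d,2r+vt(k-1))\le 2$; (3) $k^{st}\equiv (-1)^{(d+1)(r+1)}\pmod{p}$; (4) the function $g(x):=x^r\big((1-x^{ek})/(1-x^e)\big)^{st}$ is injective on $\mu_d\setminus\mu_1$; (5) $(-1)^{(d+1)(r+1)}\notin g(\mu_d\setminus\mu_1)$.
   Context: $\mu_n$ denotes the set of $n$-th roots of unity in $\mathbb{F}_q$ (so $\mu_1=\{1\}$). A polynomial permutes $\mathbb{F}_q$ if the induced map $\mathbb{F}_q\to\mathbb{F}_q$ is a bijection. Note $\gcd(d,e)=1$. *)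

(* Defs.v *)
From HB Require Import structures.
From mathcomp Require Import all_boot all_order all_algebra all_field.
Set Implicit Arguments. Unset Strict Implicit. Unset Printing Implicit Defensive.
Import Order.TTheory GRing.Theory Num.Theory.
Local Open Scope ring_scope.

Definition hk (R : comRingType) (k : nat) (x : R) : R := \sum_(i < k) x ^+ i.

Definition fpoly (R : comRingType) (r v k t : nat) (x : R) : R :=
  x ^+ r * (hk k (x ^+ v)) ^+ t.

Definition gfun (F : fieldType) (r e k s t : nat) (x : F) : F :=
  x ^+ r * ((1 - x ^+ (e * k)) / (1 - x ^+ e)) ^+ (s * t).

Definition mu_nontriv (F : finFieldType) (n : nat) : {set F} :=
  [set x : F | (x ^+ n == 1) && (x != 1)].

(* Main.v *)
Require Import Defs.
From HB Require Import structures.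
From mathcomp Require Import all_boot all_order all_algebra all_field all_solvable.
From mathcomp Require Import zify ring.
Import Order.TTheory GRing.Theory Num.Theory.
Local Open Scope ring_scope.
Set Implicit Arguments. Unset Strict Implicit. Unset Printing Implicit Defensive.

Lemma card_gt1 (F : finFieldType) : (1 < #|F|)%N.
Proof. exact: finNzRing_gt1. Qed.

Lemma unit_pow (F : finFieldType) (x : F) : x != 0 -> x ^+ #|F|.-1 = 1.
Proof.
move=> xn0; apply: (mulfI xn0); rewrite -exprS prednK ?expf_card ?mulr1 //.
exact: ltnW (card_gt1 F).
Qed.

Lemma gen_exists (F : finFieldType) : {w : F | (#|F|.-1).-primitive_root w}.
Proof.
have n_gt0 : (0 < #|F|.-1)%N by have := card_gt1 F; case: #|F| => [|[]].
pose rs := enum (predC1 (0 : F)).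
have H : has (#|F|.-1).-primitive_root rs.
  apply: has_prim_root => //.
  - apply/allP => x; rewrite mem_enum /= => xn0.
    by rewrite unity_rootE unit_pow.
  - exact: enum_uniq.
  - by rewrite -cardE cardC1.
by apply/sig_eqW; case/hasP: H => w _ Hw; exists w.
Qed.
Lemma root_gcd (F : fieldType) (a b : nat) (z : F) :
  z ^+ a = 1 -> z ^+ b = 1 -> z ^+ gcdn a b = 1.
Proof.
case: a => [|a] za zb; first by rewrite gcd0n.
have [u _ /dvdnP[c Hc]] := Bezoutl b (ltn0Sn a).
have : z ^+ (gcdn a.+1 b + u * b) = 1 by rewrite Hc mulnC exprM za expr1n.
by rewrite exprD mulnC exprM zb expr1n mulr1.
Qed.

Lemma root_cop (F : fieldType) (a b : nat) (z : F) :
  coprime a b -> z ^+ a = 1 -> z ^+ b = 1 -> z = 1.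
Proof. by move=> /eqP cab za zb; have := root_gcd za zb; rewrite cab expr1. Qed.

Lemma hk1 (R : comNzRingType) k : hk k (1 : R) = k%:R.
Proof. by rewrite /hk (eq_bigr (fun _ => 1)) ?sumr_const ?card_ord // => i _; rewrite expr1n. Qed.

Lemma hk_mul (R : comNzRingType) k (x : R) : (x - 1) * hk k x = x ^+ k - 1.
Proof. by rewrite subrX1. Qed.

Lemma hk_inv (F : fieldType) k (z : F) : z != 0 -> (0 < k)%N ->
  hk k (z^-1) * z ^+ (k.-1) = hk k z.
Proof.
move=> zn0 k0; rewrite /hk mulr_suml (reindex_inj rev_ord_inj) /=.
apply: eq_bigr => i _; rewrite exprVn.
have hi : (i <= k.-1)%N by rewrite -ltnS prednK.
have -> : (k - i.+1 = k.-1 - i)%N by lia.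
by rewrite -[in X in _ * X](subnK hi) exprD mulrA mulVf ?expf_neq0 ?mul1r.
Qed.

Lemma cop_div (a b : nat) : (0 < a)%N -> coprime (a %/ gcdn a b) (b %/ gcdn a b).
Proof.
move=> a0; have g0 : (0 < gcdn a b)%N by rewrite gcdn_gt0 a0.
rewrite /coprime -(eqn_pmul2l g0) muln1 muln_gcdr [(_ * (a %/ _))%N]mulnC [(_ * (b %/ _))%N]mulnC.
by rewrite !divnK ?dvdn_gcdl ?dvdn_gcdr.
Qed.

Lemma prim_pow_d (F : fieldType) d (w : F) (i : nat) : d.-primitive_root w -> (w ^+ i) ^+ d = 1.
Proof. by move=> wp; rewrite -exprM mulnC exprM (prim_expr_order wp) expr1n. Qed.

Lemma prim_inj (F : fieldType) d (w : F) (i j : 'I_d) : d.-primitive_root w -> w ^+ i = w ^+ j -> i = j.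
Proof.
move=> wp /eqP; rewrite (eq_prim_root_expr wp) !modn_small ?ltn_ord // => /eqP h.
exact: val_inj.
Qed.

Lemma prod_perm (F : fieldType) d (w : F) (G : F -> F) : d.-primitive_root w ->
  (forall y, y ^+ d = 1 -> G y ^+ d = 1) ->
  (forall y1 y2, y1 ^+ d = 1 -> y2 ^+ d = 1 -> G y1 = G y2 -> y1 = y2) ->
  \prod_(i < d) G (w ^+ i) = \prod_(i < d) w ^+ i.
Proof.
move=> wp hG hinj.
pose sg (i : 'I_d) := sval (prim_rootP wp (hG _ (prim_pow_d i wp))).
have sgE (i : 'I_d) : G (w ^+ i) = w ^+ (sg i) := svalP (prim_rootP wp (hG _ (prim_pow_d i wp))).
have sginj : injective sg.
  move=> i j h; apply: (prim_inj wp); apply: hinj; rewrite ?prim_pow_d //.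
  by rewrite !sgE h.
by rewrite (eq_bigr _ (fun i _ => sgE i)) [RHS](reindex_inj sginj).
Qed.

Lemma prod_exp (F : fieldType) d (w : F) (G : F -> F) j : d.-primitive_root w ->
  coprime j d -> \prod_(i < d) G ((w ^+ i) ^+ j) = \prod_(i < d) G (w ^+ i).
Proof.
move=> wp cjd; have d0 := prim_order_gt0 wp.
have zp : d.-primitive_root (w ^+ j) by rewrite prim_root_exp_coprime.
pose tau (i : 'I_d) : 'I_d := Ordinal (ltn_pmod (i * j) d0).
have tauE (i : 'I_d) : (w ^+ i) ^+ j = w ^+ (tau i).
  rewrite -exprM; change (w ^+ (i * j) = w ^+ ((i * j) %% d)).
  by rewrite expr_mod // (prim_expr_order wp).
have tinj : injective tau.
  move=> i i' h; apply: (prim_inj zp).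
  by rewrite -!exprM ![(j * _)%N]mulnC !exprM !tauE h.
by rewrite (eq_bigr _ (fun i _ => congr1 G (tauE i))) [RHS](reindex_inj tinj).
Qed.

Lemma prod_roots (F : fieldType) d (w : F) : d.-primitive_root w ->
  \prod_(i < d) w ^+ i = (-1) ^+ d.+1.
Proof.
move=> wp; have d0 := prim_order_gt0 wp.
have := congr1 (fun p => p.[0]) (factor_Xn_sub_1 wp).
rewrite /= horner_prod big_mkord.
have E : \prod_(i < d) ('X - (w ^+ i)%:P).[0] = (-1) ^+ d * \prod_(i < d) w ^+ i.
  rewrite (eq_bigr (fun i : 'I_d => -1 * w ^+ i)); last by move=> i _; rewrite hornerXsubC sub0r mulN1r.
  by rewrite big_split /= prodr_const card_ord.
rewrite E !hornerE expr0n gtn_eqF // sub0r => h.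
have h2 : (-1) ^+ d * (-1) ^+ d = 1 :> F by rewrite -exprMn mulrNN mulr1 expr1n.
by rewrite -[LHS]mul1r -{1}h2 -mulrA h exprS mulrC mulN1r.
Qed.

Section Main.
Variable F : finFieldType.
Variables r v k t : nat.
Hypotheses (r0 : (0 < r)%N) (v0 : (0 < v)%N) (k0 : (0 < k)%N) (t0 : (0 < t)%N).
Local Notation n := (#|F|.-1).
Local Notation s := (gcdn v n).
Local Notation d := (n %/ s)%N.
Local Notation e := (v %/ s)%N.
Local Notation f := (fpoly r v k t : F -> F).

Definition phi (y : F) := y ^+ r * hk k (y ^+ e) ^+ (s * t).

Lemma n_gt0 : (0 < n)%N.
Proof. by have := card_gt1 F; case: #|F| => [|[]]. Qed.
Lemma s_gt0 : (0 < s)%N.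
Proof. by rewrite gcdn_gt0 v0. Qed.
Lemma nsd : n = (s * d)%N.
Proof. by rewrite mulnC divnK ?dvdn_gcdr. Qed.
Lemma ves : v = (e * s)%N.
Proof. by rewrite divnK ?dvdn_gcdl. Qed.
Lemma d_gt0 : (0 < d)%N.
Proof. by have := n_gt0; rewrite {1}nsd muln_gt0 => /andP[]. Qed.
Lemma cop_ed : coprime e d.
Proof. exact: cop_div. Qed.

Lemma f_pow (x : F) : f x ^+ s = phi (x ^+ s).
Proof.
rewrite /fpoly /phi exprMn -!exprM -[(s * e)%N]mulnC -ves.
by rewrite [(r * s)%N]mulnC [(t * s)%N]mulnC.
Qed.

Lemma f_mul (z x : F) : z ^+ s = 1 -> f (z * x) = z ^+ r * f x.
Proof.
move=> hz; have zv : z ^+ v = 1 by rewrite ves mulnC exprM hz expr1n.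
by rewrite /fpoly !exprMn zv mul1r mulrA.
Qed.

Lemma f0 : f 0 = 0.
Proof. by rewrite /fpoly expr0n gtn_eqF // mul0r. Qed.

Lemma gen : {w : F | n.-primitive_root w & w != 0}.
Proof.
have [w wp] := gen_exists F; exists w => //.
apply/eqP => w0; move: (prim_expr_order wp); rewrite w0 expr0n gtn_eqF ?n_gt0 //.
by move/eqP; rewrite eq_sym oner_eq0.
Qed.

Lemma s_surj (y : F) : y ^+ d = 1 -> exists2 x, x != 0 & x ^+ s = y.
Proof.
move=> hy; have [w wp wn0] := gen.
have yn : y ^+ n = 1 by rewrite nsd mulnC exprM hy expr1n.
have [i yi] := prim_rootP wp yn.
have : w ^+ (i * d) = 1 by rewrite exprM -yi hy.
move/eqP; rewrite -(prim_order_dvd wp) {1}nsd dvdn_pmul2r ?d_gt0 // => /dvdnP[c hc].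
by exists (w ^+ c); rewrite ?expf_neq0 // -exprM -hc yi.
Qed.

Lemma prim_sub m : (m %| n)%N -> exists z : F, m.-primitive_root z.
Proof. by move=> hm; have [w wp _] := gen; exists (w ^+ (n %/ m)); apply: dvdn_prim_root. Qed.

Lemma prim_neq1 m (z : F) : (1 < m)%N -> m.-primitive_root z -> z != 1.
Proof.
move=> hm pz; apply/eqP => z1; have := prim_order_dvd pz 1.
by rewrite z1 expr1n eqxx dvdn1 => /eqP m1; rewrite m1 in hm.
Qed.

Lemma mu_ne0 (y : F) : y ^+ d = 1 -> y != 0.
Proof.
move=> hy; apply/eqP => y0; move: hy; rewrite y0 expr0n gtn_eqF ?d_gt0 //.
by move/eqP; rewrite eq_sym oner_eq0.
Qed.

Lemma phi_g (y : F) : y ^+ d = 1 -> y != 1 -> coprime d k ->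
  phi y = gfun r e k s t y /\ phi y != 0.
Proof.
move=> hy y1 cdk; set a := y ^+ e.
have a1 : a != 1.
  apply/eqP => ha; move/eqP: y1; apply; exact: root_cop cop_ed ha hy.
have ak1 : a ^+ k != 1.
  apply/eqP => ha; move/eqP: y1; apply; apply: (root_cop (a := (e * k)%N)) _ _ hy.
    by rewrite coprimeMl cop_ed coprime_sym cdk.
  by rewrite exprM.
have hkE := hk_mul k a.
have a1' : a - 1 != 0 by rewrite subr_eq0.
have hkn0 : hk k a != 0.
  by apply: contra ak1 => /eqP h0; move: hkE; rewrite h0 mulr0 => /eqP; rewrite eq_sym subr_eq0.
split; last by rewrite /phi; apply: mulf_neq0; apply: expf_neq0 => //; exact: mu_ne0.
rewrite /phi /gfun -/a [y ^+ (_ * k)]exprM -/a.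
have -> : (1 - a ^+ k) / (1 - a) = hk k a.
  rewrite -[1 - a ^+ k]opprB -[1 - a]opprB invrN mulrNN -hkE mulrC mulrA.
  by rewrite mulVf // mul1r.
by [].
Qed.

Lemma phi1 : phi 1 = (k ^ (s * t))%:R.
Proof. by rewrite /phi !expr1n hk1 mul1r natrX. Qed.


Local Notation sg := ((-1) ^+ ((d + 1) * (r + 1)) : F).

Lemma memmu (y : F) : y ^+ d = 1 -> y != 1 -> y \in mu_nontriv F d.
Proof. by move=> h1 h2; rewrite inE h1 eqxx h2. Qed.

Lemma sgn0 : sg != 0.
Proof. by rewrite expf_neq0 // oppr_eq0 oner_eq0. Qed.

Lemma powd (x : F) : x != 0 -> (x ^+ s) ^+ d = 1.
Proof. by move=> xn0; rewrite -exprM -nsd unit_pow. Qed.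

Lemma bwd : coprime r s -> coprime d k -> (k ^ (s * t))%:R = sg ->
  {in mu_nontriv F d &, injective (gfun r e k s t)} ->
  sg \notin (gfun r e k s t) @: mu_nontriv F d -> injective f.
Proof.
move=> crs cdk hk3 hinj hn.
have phinz y : y ^+ d = 1 -> phi y != 0.
  move=> hy; case: (eqVneq y 1) => [->|y1]; first by rewrite phi1 hk3 sgn0.
  by case: (phi_g hy y1 cdk).
have phiinj y1 y2 : y1 ^+ d = 1 -> y2 ^+ d = 1 -> phi y1 = phi y2 -> y1 = y2.
  move=> h1 h2.
  case: (eqVneq y1 1) => [->|n1]; case: (eqVneq y2 1) => [->|n2] //.
  - rewrite phi1 hk3 => E; case/negP: hn; apply/imsetP; exists y2; first exact: memmu.
    by rewrite E; case: (phi_g h2 n2 cdk).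
  - rewrite phi1 hk3 => E; case/negP: hn; apply/imsetP; exists y1; first exact: memmu.
    by rewrite -E; case: (phi_g h1 n1 cdk).
  - case: (phi_g h1 n1 cdk) => -> _; case: (phi_g h2 n2 cdk) => -> _.
    by apply: hinj; exact: memmu.
have fnz x : x != 0 -> f x != 0.
  move=> xn0; apply/eqP => fx0; have := phinz _ (powd xn0).
  by rewrite -f_pow fx0 expr0n gtn_eqF ?s_gt0 ?eqxx.
move=> x1 x2.
case: (eqVneq x1 0) => [->|n1]; case: (eqVneq x2 0) => [->|n2] // hx.
- by move: (fnz _ n2); rewrite -hx f0 eqxx.
- by move: (fnz _ n1); rewrite hx f0 eqxx.
have E : x1 ^+ s = x2 ^+ s by apply: phiinj; rewrite ?powd // -!f_pow hx.
set z := x1 / x2.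
have zs : z ^+ s = 1 by rewrite /z expr_div_n E divff // expf_neq0.
have x1z : x1 = z * x2 by rewrite /z divfK.
have zr : z ^+ r = 1.
  move: hx; rewrite x1z f_mul // => h; apply: (mulIf (fnz _ n2)); by rewrite mul1r.
by rewrite x1z (root_cop crs zr zs) mul1r.
Qed.

Lemma d_dvd : (d %| n)%N.
Proof. by apply/dvdnP; exists s; exact: nsd. Qed.

Lemma pow_of_dvd (z : F) m a : z ^+ m = 1 -> (m %| a)%N -> z ^+ a = 1.
Proof. by move=> zm /dvdnP[c ->]; rewrite mulnC exprM zm expr1n. Qed.

Lemma fwd_rs : injective f -> coprime r s.
Proof.
move=> finj; rewrite /coprime; apply/negPn/negP => hm.
have m0 : (0 < gcdn r s)%N by rewrite gcdn_gt0 r0.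
have m1 : (1 < gcdn r s)%N by rewrite ltn_neqAle eq_sym hm m0.
have [z zp] := prim_sub (dvdn_trans (dvdn_gcdr r s) (dvdn_gcdr v n)).
have zm := prim_expr_order zp.
have zr : z ^+ r = 1 by apply: pow_of_dvd zm (dvdn_gcdl _ _).
have zs : z ^+ s = 1 by apply: pow_of_dvd zm (dvdn_gcdr _ _).
have := finj (z * 1) 1; rewrite f_mul // zr mul1r mulr1 => /(_ erefl) z1.
by have := prim_neq1 m1 zp; rewrite z1 eqxx.
Qed.

Lemma fwd_dk : injective f -> coprime d k.
Proof.
move=> finj; rewrite /coprime; apply/negPn/negP => hm.
have m0 : (0 < gcdn d k)%N by rewrite gcdn_gt0 d_gt0.
have m1 : (1 < gcdn d k)%N by rewrite ltn_neqAle eq_sym hm m0.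
have [z zp] := prim_sub (dvdn_trans (dvdn_gcdl d k) d_dvd).
have zm := prim_expr_order zp.
have zeta : (gcdn d k).-primitive_root (z ^+ e).
  by rewrite prim_root_exp_coprime // (coprime_dvdr (dvdn_gcdl d k) cop_ed).
have zd : z ^+ d = 1 by apply: pow_of_dvd zm (dvdn_gcdl _ _).
have [x xn0 xs] := s_surj zd.
have xv : x ^+ v = z ^+ e by rewrite {1}ves mulnC exprM xs.
have zek : (z ^+ e) ^+ k = 1 by apply: pow_of_dvd (prim_expr_order zeta) (dvdn_gcdr _ _).
have hk0 : hk k (z ^+ e) = 0.
  have := hk_mul k (z ^+ e); rewrite zek subrr => /eqP; rewrite mulf_eq0 subr_eq0.
  by rewrite (negPf (prim_neq1 m1 zeta)) /= => /eqP.
have := finj x 0; rewrite f0 /fpoly xv hk0 expr0n gtn_eqF // mulr0 => /(_ erefl) x0.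
by rewrite x0 eqxx in xn0.
Qed.

Lemma fwd_phi : injective f ->
  (forall y, y ^+ d = 1 -> phi y != 0 /\ (phi y) ^+ d = 1) /\
  (forall y1 y2, y1 ^+ d = 1 -> y2 ^+ d = 1 -> phi y1 = phi y2 -> y1 = y2).
Proof.
move=> finj; have crs := fwd_rs finj.
have fnz x : x != 0 -> f x != 0.
  by move=> xn0; apply: contra xn0 => /eqP h; apply/eqP; apply: finj; rewrite h f0.
split.
  move=> y hy; have [x xn0 <-] := s_surj hy; rewrite -f_pow; split.
    by rewrite expf_neq0 // fnz.
  by rewrite powd // fnz.
move=> y1 y2 h1 h2; have [x1 n1 <-] := s_surj h1; have [x2 n2 <-] := s_surj h2.
rewrite -!f_pow => E.
set z := f x1 / f x2.
have zs : z ^+ s = 1 by rewrite /z expr_div_n E divff // expf_neq0 // fnz.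
have fz : f x1 = z * f x2 by rewrite /z divfK // fnz.
have [a _ /dvdnP[c hc]] := Bezoutl r s_gt0.
move: hc; rewrite gcdnC (eqP crs) => hc.
have za : z * z ^+ (a * r) = 1 by rewrite -exprS -addn1 addnC hc mulnC exprM zs expr1n.
have zas : (z ^+ a) ^+ s = 1 by rewrite -exprM mulnC exprM zs expr1n.
have : f (z ^+ a * x1) = f x2 by rewrite f_mul // fz mulrA -exprM (mulrC _ z) za mul1r.
move/finj => <-; by rewrite exprMn zas mul1r.
Qed.

Lemma ne1 (y : F) j : y ^+ d = 1 -> y != 1 -> coprime j d -> y ^+ j != 1.
Proof. by move=> hy y1 cj; apply/eqP => h; move/eqP: y1; apply; exact: root_cop cj h hy. Qed.

Lemma fwd_k : injective f -> (k ^ (s * t))%:R = sg.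
Proof.
move=> finj; have cdk := fwd_dk finj; have [phiP phiinj] := fwd_phi finj.
have cekd : coprime (e * k) d by rewrite coprimeMl cop_ed coprime_sym cdk.
have [w wp] := prim_sub d_dvd.
pose Gm (z : F) := if z == 1 then 1 else 1 - z.
pose c (y : F) := if y == 1 then (k ^ (s * t))%:R else 1 : F.
have iden y : y ^+ d = 1 ->
    phi y * Gm (y ^+ e) ^+ (s * t) = c y * y ^+ r * Gm (y ^+ (e * k)) ^+ (s * t).
  move=> hy; rewrite /Gm /c; case: (eqVneq y 1) => [->|y1].
    by rewrite !expr1n eqxx phi1 !expr1n !mulr1.
  rewrite (negPf (ne1 hy y1 cop_ed)) (negPf (ne1 hy y1 cekd)).
  rewrite mul1r /phi -mulrA -exprMn.
  have := hk_mul k (y ^+ e); rewrite -exprM => h.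
  by rewrite -[1 - y ^+ e]opprB mulrN [hk k _ * _]mulrC h opprB.
have Hm : \prod_(i < d) (phi (w ^+ i) * Gm ((w ^+ i) ^+ e) ^+ (s * t)) =
          \prod_(i < d) (c (w ^+ i) * (w ^+ i) ^+ r * Gm ((w ^+ i) ^+ (e * k)) ^+ (s * t)).
  by apply: eq_bigr => i _; apply: iden; exact: prim_pow_d.
rewrite [LHS]big_split [RHS]big_split /= in Hm.
rewrite [X in _ = X * _]big_split /= !prodrXl (prod_exp Gm wp cop_ed) (prod_exp Gm wp cekd) in Hm.
rewrite (prod_perm wp (fun y hy => (phiP y hy).2) phiinj) in Hm.
have cprod : \prod_(i < d) c (w ^+ i) = (k ^ (s * t))%:R.
  rewrite (bigD1 (Ordinal d_gt0)) //= expr0 {1}/c eqxx big1 ?mulr1 // => i hi.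
  rewrite /c -(prim_order_dvd wp) gtnNdvd ?ltn_ord //.
  by rewrite lt0n; apply: contra hi => /eqP h; apply/eqP; apply: val_inj.
have Gn0 : \prod_(i < d) Gm (w ^+ i) != 0.
  apply/prodf_neq0 => i _; rewrite /Gm.
  by case: (eqVneq (w ^+ i) 1) => [_|h]; [exact: oner_neq0 | rewrite subr_eq0 eq_sym].
rewrite cprod (prod_roots wp) in Hm.
move/(mulIf (expf_neq0 _ Gn0)): Hm => Hm.
set Q := (-1) ^+ d.+1 : F in Hm.
have QQ : Q ^+ r * Q ^+ r = 1 by rewrite -exprMn -exprMn mulrNN mulr1 !expr1n.
have -> : (k ^ (s * t))%:R = (k ^ (s * t))%:R * (Q ^+ r * Q ^+ r) :> F by rewrite QQ mulr1.
by rewrite mulrA -Hm -exprS -exprM !addn1.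
Qed.

Lemma fwd_2 : injective f -> (gcdn d (2 * r + v * t * (k - 1)) <= 2)%N.
Proof.
move=> finj; have [phiP phiinj] := fwd_phi finj.
set N := (2 * r + v * t * (k - 1))%N.
rewrite leqNgt; apply/negP => hm.
have [z zp] := prim_sub (dvdn_trans (dvdn_gcdl d N) d_dvd).
have zm := prim_expr_order zp.
have zd : z ^+ d = 1 by apply: pow_of_dvd zm (dvdn_gcdl _ _).
have zN : z ^+ N = 1 by apply: pow_of_dvd zm (dvdn_gcdr _ _).
have zn0 : z != 0 := mu_ne0 zd.
have zid : (z^-1) ^+ d = 1 by rewrite exprVn zd invr1.
have hN : N = (r + r + e * k.-1 * (s * t))%N.
  rewrite /N {1}ves subn1; nia.
have H1 : hk k ((z^-1) ^+ e) * (z ^+ e) ^+ (k.-1) = hk k (z ^+ e).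
  by rewrite exprVn hk_inv // expf_neq0.
have ac : (z^-1) ^+ r * (z ^+ r * z ^+ r) = z ^+ r.
  by rewrite exprVn mulrA mulVf ?mul1r // expf_neq0.
have : phi (z^-1) = phi z.
  have E2 : z ^+ (e * k.-1 * (s * t)) = ((z ^+ e) ^+ k.-1) ^+ (s * t) by rewrite !exprM.
  rewrite -[LHS]mulr1 -zN hN !exprD E2 /phi -H1 exprMn -{3}ac.
  set A := z^-1 ^+ r; set B := z ^+ r; set C := hk k _ ^+ _; set D := (_ ^+ k.-1) ^+ _.
  by rewrite !mulrA; congr (_ * _); rewrite -!mulrA; congr (_ * _); rewrite mulrC -!mulrA.
move/(phiinj _ _ zid zd) => h.
have : z ^+ 2 = 1 by rewrite expr2 -{1}h mulVf.
move/eqP; rewrite -(prim_order_dvd zp) => /(dvdn_leq (isT : (0 < 2)%N)).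
by rewrite leqNgt hm.
Qed.

Lemma cong_iff p K m : p \in [pchar F] ->
  ((K%:Z == (-1) ^+ m %[mod p%:Z])%Z) = ((K%:R : F) == (-1) ^+ m).
Proof.
move=> pch; rewrite eqz_mod_dvd (dvdz_pcharf pch) rmorphB /= rmorphXn rmorphN rmorph1.
by rewrite subr_eq0.
Qed.

Lemma main_iff p : p \in [pchar F] ->
  bijective f <->
  [/\ gcdn r s = 1%N /\ gcdn d k = 1%N,
      (gcdn d (2 * r + v * t * (k - 1)) <= 2)%N,
      ((k ^ (s * t))%:Z == (-1) ^+ ((d + 1) * (r + 1)) %[mod (p%:Z)])%Z,
      {in mu_nontriv F d &, injective (gfun r e k s t : F -> F)}
    & (-1) ^+ ((d + 1) * (r + 1)) \notin (gfun r e k s t : F -> F) @: mu_nontriv F d].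
Proof.
move=> pch; rewrite (cong_iff _ _ pch); split.
  move=> fb; have finj := bij_inj fb.
  have crs := fwd_rs finj; have cdk := fwd_dk finj; have hk3 := fwd_k finj.
  have [phiP phiinj] := fwd_phi finj.
  split.
  - by split; apply/eqP.
  - exact: fwd_2.
  - by rewrite hk3.
  - move=> y1 y2; rewrite !inE => /andP[/eqP h1 n1] /andP[/eqP h2 n2].
    case: (phi_g h1 n1 cdk) => <- _; case: (phi_g h2 n2 cdk) => <- _.
    exact: phiinj.
  - apply/imsetP => -[y]; rewrite inE => /andP[/eqP hy y1].
    case: (phi_g hy y1 cdk) => <- _ E.
    have := phiinj _ _ hy (expr1n F d) _; rewrite phi1 hk3 E => /(_ erefl) y1'.
    by rewrite y1' eqxx in y1.
case=> [[h1 h2] _ /eqP h3 h4 h5]; apply: injF_bij; apply: bwd => //.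
  by rewrite /coprime h1.
by rewrite /coprime h2.
Qed.

End Main.

Unset Implicit Arguments.
Set Strict Implicit.

Theorem proposition3p2 (F : finFieldType) (p : nat) (r v k t : nat) :
  p \in [pchar F] ->
  (0 < r)%N -> (0 < v)%N -> (0 < k)%N -> (0 < t)%N ->
  let q := #|F| in
  let s := gcdn v q.-1 in
  let d := (q.-1 %/ s)%N in
  let e := (v %/ s)%N in
  bijective (fpoly r v k t : F -> F) <->
  [/\ gcdn r s = 1%N /\ gcdn d k = 1%N,
      (gcdn d (2 * r + v * t * (k - 1)) <= 2)%N,
      ((k ^ (s * t))%:Z == (-1) ^+ ((d + 1) * (r + 1)) %[mod (p%:Z)])%Z,
      {in mu_nontriv F d &, injective (gfun r e k s t : F -> F)}
    & (-1) ^+ ((d + 1) * (r + 1)) \notin (gfun r e k s t : F -> F) @: mu_nontriv F d].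
Proof.
move=> pch r0 v0 k0 t0 q s d e.
exact: (main_iff r0 v0 k0 t0 pch).
Qed.
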